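(* Let $v$ be a non-constant analytic function on $\mathbb{T}=\mathbb{R}/\mathbb{Z}$ whose shortest (positive) period is $1$. Then there exist $s\in\mathbb{N}$ and $c>0$ such that $$\max_{0\le l\le s}\left|\partial_\theta^l\big(v(\theta+\phi)-v(\theta)\big)\right|\ge c\|\phi\|_{\mathbb{T}}\quad\forall\theta,\phi\in\mathbb{T}.$$
   Context: $\|\phi\|_{\mathbb{T}}=\inf_{l\in\mathbb{Z}}|l-\phi|$. *)

(* Defs.v *)
From Stdlib Require Import Reals ZArith.
From Coquelicot Require Import Coquelicot.
Open Scope R_scope.

Definition real_analytic (v : R -> R) : Prop :=
  forall x : R, exists (a : nat -> R) (r : R), 0 < r /\
    forall y : R, Rabs (y - x) < r -> is_pseries a (y - x) (v y).

Definition is_period (v : R -> R) (T : R) : Prop := forall x : R, v (x + T) = v x.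

Definition minimal_period_one (v : R -> R) : Prop :=
  is_period v 1 /\ forall T : R, 0 < T < 1 -> ~ is_period v T.

Definition torus_norm (phi : R) : R :=
  real (Glb_Rbar (fun x : R => exists l : Z, x = Rabs (IZR l - phi))).

Fixpoint max_upto (f : nat -> R) (s : nat) : R :=
  match s with
  | O => f O
  | S n => Rmax (max_upto f n) (f (S n))
  end.

(* Main.v *)
Require Import Defs.
From Stdlib Require Import Reals ZArith Lra Lia Classical ClassicalEpsilon.
From Coquelicot Require Import Coquelicot.
Open Scope R_scope.
Open Scope R_scope.

Lemma ball_R (x y e : R) : ball x e y <-> Rabs (y - x) < e.
Proof. reflexivity. Qed.

Lemma locally_of (x r : R) (P : R -> Prop) : 0 < r ->
  (forall y, Rabs (y - x) < r -> P y) -> locally x P.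
Proof. intros Hr H. exists (mkposreal r Hr). intros y Hy. apply H. exact Hy. Qed.

Lemma cont_eps (f : R -> R) (x : R) : continuous f x ->
  forall eps, 0 < eps -> exists delta, 0 < delta /\
    forall y, Rabs (y - x) < delta -> Rabs (f y - f x) < eps.
Proof.
  intros Hc eps He.
  destruct (proj1 (filterlim_locally f (f x)) Hc (mkposreal eps He)) as [d Hd].
  exists d; split; [apply cond_pos|]. intros y Hy. apply (Hd y). exact Hy.
Qed.

Lemma rad_lemma (a : nat -> R) (r : R) :
  (forall z, Rabs z < r -> ex_pseries a z) ->
  forall w, Rabs w < r -> Rbar_lt (Rabs w) (CV_radius a).
Proof.
  intros H w Hw.
  set (z := (Rabs w + r) / 2).
  assert (Hz : Rabs z < r).
  { unfold z. rewrite Rabs_pos_eq; [lra|]. pose proof (Rabs_pos w); lra. }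
  assert (Hle : Rbar_le (Rabs z) (CV_radius a)).
  { apply Rbar_not_lt_le. intro Hlt. apply (CV_disk_outside a z Hlt).
    pose proof (ex_series_lim_0 _ (H z Hz)) as L.
    eapply is_lim_seq_ext; [|exact L]. intro n. simpl.
    rewrite pow_n_pow. unfold scal; simpl. unfold mult; simpl. ring. }
  assert (Hwz : Rabs w < Rabs z).
  { unfold z. rewrite (Rabs_pos_eq ((Rabs w + r)/2)); [lra|]. pose proof (Rabs_pos w); lra. }
  destruct (CV_radius a) as [c| |]; simpl in *; try easy. lra.
Qed.

Lemma analytic_rep (f : R -> R) : real_analytic f -> forall x,
  exists a r, 0 < r /\ (forall w, Rabs w < r -> Rbar_lt (Rabs w) (CV_radius a)) /\
    forall y, Rabs (y - x) < r -> f y = PSeries a (y - x).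
Proof.
  intros Hf x. destruct (Hf x) as [a [r [Hr H]]].
  exists a, r. split; [exact Hr|]. split.
  - apply rad_lemma. intros z Hz. specialize (H (z + x)).
    replace (z + x - x) with z in H by ring. eexists. apply H. exact Hz.
  - intros y Hy. symmetry. apply is_pseries_unique. apply H. exact Hy.
Qed.

Lemma analytic_derive_loc (f : R -> R) (a : nat -> R) (x r : R) :
  (forall w, Rabs w < r -> Rbar_lt (Rabs w) (CV_radius a)) ->
  (forall y, Rabs (y - x) < r -> f y = PSeries a (y - x)) ->
  forall y, Rabs (y - x) < r -> forall k,
    is_derive_n f k y (Derive_n (PSeries a) k (y - x)).
Proof.
  intros Hrad Hrep y Hy k.
  apply (is_derive_n_ext_loc (fun t => PSeries a (t + - x))).
  - apply (locally_of y (r - Rabs (y - x))); [lra|].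
    intros t Ht. symmetry. apply Hrep.
    replace (t - x) with ((t - y) + (y - x)) by ring.
    pose proof (Rabs_triang (t - y) (y - x)). lra.
  - apply is_derive_n_comp_trans. apply Derive_n_correct.
    apply ex_derive_n_PSeries. apply Hrad. exact Hy.
Qed.

Lemma analytic_smooth (f : R -> R) : real_analytic f -> forall k y, ex_derive_n f k y.
Proof.
  intros Hf k y. destruct (analytic_rep f Hf y) as [a [r [Hr [Hrad Hrep]]]].
  assert (Hy : Rabs (y - y) < r) by (rewrite Rminus_diag, Rabs_R0; lra).
  pose proof (analytic_derive_loc f a y r Hrad Hrep y Hy k) as D.
  destruct k; [exact I|]. eexists. exact D.
Qed.

Lemma analytic_deriv (f : R -> R) : real_analytic f -> forall k y,
  is_derive (Derive_n f k) y (Derive_n f (S k) y).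
Proof.
  intros Hf k y. apply Derive_correct. exact (analytic_smooth f Hf (S k) y).
Qed.

Lemma analytic_cont (f : R -> R) : real_analytic f -> forall k y,
  continuous (Derive_n f k) y.
Proof.
  intros Hf k y. exact (ex_derive_continuous (Derive_n f k) y (analytic_smooth f Hf (S k) y)).
Qed.

Lemma analytic_coef (f : R -> R) (a : nat -> R) (x r : R) : 0 < r ->
  (forall w, Rabs w < r -> Rbar_lt (Rabs w) (CV_radius a)) ->
  (forall y, Rabs (y - x) < r -> f y = PSeries a (y - x)) ->
  forall k, Derive_n f k x = a k * INR (fact k).
Proof.
  intros Hr Hrad Hrep k.
  assert (Hy : Rabs (x - x) < r) by (rewrite Rminus_diag, Rabs_R0; lra).
  pose proof (analytic_derive_loc f a x r Hrad Hrep x Hy k) as D.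
  rewrite (is_derive_n_unique _ _ _ _ D). rewrite Rminus_diag.
  apply Derive_n_coef. rewrite <- Rabs_R0. apply Hrad. rewrite Rabs_R0; exact Hr.
Qed.

Lemma clopen_right (P : R -> Prop) (x0 : R) : P x0 ->
  (forall x, P x -> exists r, 0 < r /\ forall y, Rabs (y - x) < r -> P y) ->
  (forall x, ~ P x -> exists r, 0 < r /\ forall y, Rabs (y - x) < r -> ~ P y) ->
  forall y, x0 <= y -> P y.
Proof.
  intros H0 Hop Hcl y Hy. destruct (classic (P y)) as [Hp|Hn]; [exact Hp|exfalso].
  set (E := fun t => x0 <= t <= y /\ forall u, x0 <= u <= t -> P u).
  destruct (completeness E) as [s [Hub Hlub]].
  { exists y. intros t [Ht _]. lra. }
  { exists x0. split; [lra|]. intros u Hu. replace u with x0 by lra. exact H0. }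
  assert (E0 : E x0).
  { split; [lra|]. intros u Hu. replace u with x0 by lra. exact H0. }
  assert (Hs0 : x0 <= s) by (apply Hub; exact E0).
  assert (Hsy : s <= y) by (apply Hlub; intros t [Ht _]; lra).
  assert (A : forall u, x0 <= u < s -> P u).
  { intros u Hu. destruct (classic (exists t, E t /\ u < t)) as [[t [[Ht1 Ht2] Hut]]|Hno].
    - apply Ht2. lra.
    - assert (s <= u); [|lra]. apply Hlub. intros t Et.
      destruct (Rle_or_lt t u) as [|Hlt]; [assumption|]. exfalso. apply Hno. exists t; auto. }
  assert (Ps : P s).
  { destruct (classic (P s)) as [|Hns]; [assumption|exfalso].
    destruct (Hcl s Hns) as [r [Hr Hb]].
    destruct (Req_dec s x0) as [Heq|Hne].
    - subst s. apply Hns. exact H0.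
    - set (u := Rmax x0 (s - r/2)).
      assert (Hu1 : x0 <= u) by apply Rmax_l.
      assert (Hu2 : u < s) by (unfold u; apply Rmax_lub_lt; lra).
      assert (Hu3 : s - r/2 <= u) by apply Rmax_r.
      apply (Hb u). rewrite Rabs_left by lra. lra. apply A. lra. }
  destruct (Hop s Ps) as [r [Hr Hb]].
  assert (Hsy' : s < y). { destruct Hsy as [|Heq]; [assumption|]. subst. contradiction. }
  set (t' := Rmin (s + r/2) y).
  assert (Et : E t').
  { split.
    - split; [unfold t'; apply Rmin_glb; lra| apply Rmin_r].
    - intros u Hu. destruct (Rlt_or_le u s) as [Hlt|Hge].
      + apply A; lra.
      + apply Hb. assert (u <= s + r/2) by (pose proof (Rmin_l (s + r/2) y); unfold t' in Hu; lra).
        rewrite Rabs_pos_eq by lra. lra. }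
  assert (t' <= s) by (apply Hub; exact Et).
  assert (s < t') by (unfold t'; apply Rmin_glb_lt; lra). lra.
Qed.

Lemma clopen_all (P : R -> Prop) (x0 : R) : P x0 ->
  (forall x, P x -> exists r, 0 < r /\ forall y, Rabs (y - x) < r -> P y) ->
  (forall x, ~ P x -> exists r, 0 < r /\ forall y, Rabs (y - x) < r -> ~ P y) ->
  forall y, P y.
Proof.
  intros H0 Hop Hcl y. destruct (Rle_or_lt x0 y) as [H|H].
  - exact (clopen_right P x0 H0 Hop Hcl y H).
  - set (Q := fun x => P (- x)).
    assert (HQ : Q (- y)).
    { apply (clopen_right Q (- x0)).
      - unfold Q. rewrite Ropp_involutive. exact H0.
      - intros x Hx. destruct (Hop (- x) Hx) as [r [Hr Hb]]. exists r. split; [exact Hr|].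
        intros z Hz. apply Hb. replace (- z - - x) with (- (z - x)) by ring.
        rewrite Rabs_Ropp. exact Hz.
      - intros x Hx. destruct (Hcl (- x) Hx) as [r [Hr Hb]]. exists r. split; [exact Hr|].
        intros z Hz. apply Hb. replace (- z - - x) with (- (z - x)) by ring.
        rewrite Rabs_Ropp. exact Hz.
      - lra. }
    unfold Q in HQ. rewrite Ropp_involutive in HQ. exact HQ.
Qed.

Lemma identity_thm (f h : R -> R) : real_analytic f -> real_analytic h ->
  forall x0, (forall k, Derive_n f k x0 = Derive_n h k x0) -> forall y, f y = h y.
Proof.
  intros Hf Hh x0 H0 y.
  set (P := fun x => forall k, Derive_n f k x = Derive_n h k x).
  assert (HP : forall y, P y).
  { apply (clopen_all P x0 H0).
    - intros x Hx.
      destruct (analytic_rep f Hf x) as [a [r1 [Hr1 [Hrad1 Hrep1]]]].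
      destruct (analytic_rep h Hh x) as [b [r2 [Hr2 [Hrad2 Hrep2]]]].
      assert (Hab : forall k, a k = b k).
      { intro k. pose proof (Hx k) as E.
        rewrite (analytic_coef f a x r1 Hr1 Hrad1 Hrep1 k) in E.
        rewrite (analytic_coef h b x r2 Hr2 Hrad2 Hrep2 k) in E.
        apply Rmult_eq_reg_r in E; [exact E|]. apply INR_fact_neq_0. }
      exists (Rmin r1 r2). split; [apply Rmin_pos; assumption|].
      intros z Hz k. apply Derive_n_ext_loc.
      apply (locally_of z (Rmin r1 r2 - Rabs (z - x))); [lra|].
      intros t Ht.
      assert (Htx : Rabs (t - x) < Rmin r1 r2).
      { replace (t - x) with ((t - z) + (z - x)) by ring.
        pose proof (Rabs_triang (t - z) (z - x)). lra. }
      pose proof (Rmin_l r1 r2). pose proof (Rmin_r r1 r2).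
      rewrite (Hrep1 t) by lra. rewrite (Hrep2 t) by lra. apply PSeries_ext. exact Hab.
    - intros x Hx. apply not_all_ex_not in Hx. destruct Hx as [k Hk].
      set (m := Rabs (Derive_n f k x - Derive_n h k x)).
      assert (Hm : 0 < m) by (apply Rabs_pos_lt; intro; apply Hk; lra).
      destruct (cont_eps _ x (analytic_cont f Hf k x) (m/2)) as [d1 [Hd1 C1]]; [lra|].
      destruct (cont_eps _ x (analytic_cont h Hh k x) (m/2)) as [d2 [Hd2 C2]]; [lra|].
      exists (Rmin d1 d2). split; [apply Rmin_pos; assumption|].
      intros z Hz Pz. specialize (Pz k).
      pose proof (Rmin_l d1 d2). pose proof (Rmin_r d1 d2).
      specialize (C1 z ltac:(lra)). specialize (C2 z ltac:(lra)).
      assert (m <= Rabs (Derive_n f k z - Derive_n f k x) + Rabs (Derive_n h k z - Derive_n h k x)).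
      { unfold m. rewrite <- (Rabs_Ropp (Derive_n f k z - Derive_n f k x)).
        replace (Derive_n f k x - Derive_n h k x) with
          (- (Derive_n f k z - Derive_n f k x) + (Derive_n h k z - Derive_n h k x)) by (rewrite Pz; ring).
        apply Rabs_triang. }
      lra. }
  exact (HP y 0%nat).
Qed.

Lemma analytic_shift (f : R -> R) (b : R) : real_analytic f -> real_analytic (fun t => f (t + b)).
Proof.
  intros Hf x. destruct (Hf (x + b)) as [a [r [Hr H]]]. exists a, r. split; [exact Hr|].
  intros y Hy. replace (y - x) with (y + b - (x + b)) by ring. apply H.
  replace (y + b - (x + b)) with (y - x) by ring. exact Hy.
Qed.

Lemma analytic_const (c : R) : real_analytic (fun _ => c).
Proof.
  intros x. exists (fun n => match n with O => c | S _ => 0 end), 1. split; [lra|].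
  intros y _. apply is_pseries_R. unfold is_series.
  apply (filterlim_ext (fun _ => c)).
  - intro n. induction n as [|n IH].
    + rewrite sum_O. simpl. ring.
    + rewrite sum_Sn, <- IH. unfold plus; simpl. ring.
  - apply filterlim_const.
Qed.

Lemma Dg (v : R -> R) : real_analytic v -> forall l theta phi,
  Derive_n (fun t => v (t + phi) - v t) l theta = Derive_n v l (theta + phi) - Derive_n v l theta.
Proof.
  intros Hv l theta phi. rewrite Derive_n_minus.
  - rewrite Derive_n_comp_trans. reflexivity.
  - apply filter_forall. intros y k _. apply ex_derive_n_comp_trans. apply analytic_smooth; exact Hv.
  - apply filter_forall. intros y k _. apply analytic_smooth; exact Hv.
Qed.

Lemma Vper1 (v : R -> R) : is_period v 1 -> forall k x, Derive_n v k (x + 1) = Derive_n v k x.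
Proof.
  intros Hp k x. rewrite <- Derive_n_comp_trans. apply Derive_n_ext. intro t. apply Hp.
Qed.

Lemma VperN (v : R -> R) : is_period v 1 -> forall k n x, Derive_n v k (x + INR n) = Derive_n v k x.
Proof.
  intros Hp k n. induction n as [|n IH]; intro x.
  - simpl. rewrite Rplus_0_r. reflexivity.
  - rewrite S_INR. replace (x + (INR n + 1)) with ((x + INR n) + 1) by ring.
    rewrite Vper1 by exact Hp. apply IH.
Qed.

Lemma VperZ (v : R -> R) : is_period v 1 -> forall k z x, Derive_n v k (x + IZR z) = Derive_n v k x.
Proof.
  intros Hp k z x. destruct (Z_le_gt_dec 0 z) as [Hz|Hz].
  - rewrite <- (Z2Nat.id z Hz). rewrite <- INR_IZR_INZ. apply VperN; exact Hp.
  - assert (Hz' : (0 <= - z)%Z) by lia.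
    replace z with (- Z.of_nat (Z.to_nat (- z)))%Z by lia.
    rewrite opp_IZR, <- INR_IZR_INZ.
    rewrite <- (VperN v Hp k (Z.to_nat (- z)) (x + - INR (Z.to_nat (- z)))).
    f_equal. ring.
Qed.

Lemma tn_le (phi : R) (l : Z) : torus_norm phi <= Rabs (IZR l - phi).
Proof.
  unfold torus_norm. destruct (Glb_Rbar_correct (fun x => exists l : Z, x = Rabs (IZR l - phi))) as [Hlb _].
  specialize (Hlb (Rabs (IZR l - phi)) (ex_intro _ l eq_refl)).
  destruct (Glb_Rbar _) as [r| |]; simpl in *; try easy. apply Rabs_pos.
Qed.

Lemma tn_nonneg (phi : R) : 0 <= torus_norm phi.
Proof.
  unfold torus_norm. destruct (Glb_Rbar_correct (fun x => exists l : Z, x = Rabs (IZR l - phi))) as [_ Hg].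
  assert (H0 : Rbar_le (Finite 0) (Glb_Rbar (fun x => exists l : Z, x = Rabs (IZR l - phi)))).
  { apply Hg. intros x [l ->]. simpl. apply Rabs_pos. }
  destruct (Glb_Rbar _) as [r| |]; simpl in *; try easy; lra.
Qed.

Lemma tn_le1 (phi : R) : torus_norm phi <= 1.
Proof.
  pose proof (tn_le phi (up phi)). destruct (archimed phi) as [H1 H2].
  rewrite Rabs_pos_eq in H by lra. lra.
Qed.

Lemma tn_shift (phi : R) (n : Z) : torus_norm (phi + IZR n) = torus_norm phi.
Proof.
  unfold torus_norm. f_equal. apply Glb_Rbar_eqset. intro x. split.
  - intros [l ->]. exists (l - n)%Z. rewrite minus_IZR. f_equal. ring.
  - intros [l ->]. exists (l + n)%Z. rewrite plus_IZR. f_equal. ring.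
Qed.

Lemma max_upto_ge (f : nat -> R) (s k : nat) : (k <= s)%nat -> f k <= max_upto f s.
Proof.
  induction s as [|s IH]; intro Hk.
  - inversion Hk. simpl. lra.
  - inversion Hk as [|? Hk']. + simpl. apply Rmax_r.
    + simpl. eapply Rle_trans; [apply IH; exact Hk'|apply Rmax_l].
Qed.

Lemma max_upto_mono (f : nat -> R) (s S : nat) : (s <= S)%nat -> max_upto f s <= max_upto f S.
Proof.
  induction 1 as [|S Hs IH]; [lra|]. simpl. eapply Rle_trans; [exact IH|apply Rmax_l].
Qed.

Lemma near0 (v : R -> R) : real_analytic v -> (~ exists k : R, forall x : R, v x = k) ->
  forall u, exists k c r, 0 < c /\ 0 < r /\ forall theta psi,
    Rabs (theta - u) < r -> Rabs psi < r ->
    c * Rabs psi <= Rabs (Derive_n v k (theta + psi) - Derive_n v k theta).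
Proof.
  intros Hv Hnc u.
  assert (Hk : exists k, Derive_n v (S k) u <> 0).
  { destruct (classic (exists k, Derive_n v (S k) u <> 0)) as [H|H]; [exact H|exfalso].
    apply Hnc. exists (v u).
    apply (identity_thm v (fun _ => v u) Hv (analytic_const _) u).
    intros [|k]; [reflexivity|]. rewrite Derive_n_const.
    apply NNPP. intro H'. apply H. exists k. exact H'. }
  destruct Hk as [k Hk].
  set (m := Rabs (Derive_n v (S k) u)).
  assert (Hm : 0 < m) by (apply Rabs_pos_lt; exact Hk).
  destruct (cont_eps _ u (analytic_cont v Hv (S k) u) (m/2)) as [d [Hd C]]; [lra|].
  exists k, (m/2), (d/2). split; [lra|]. split; [lra|].
  intros theta psi Ht Hpsi.
  destruct (MVT_gen (Derive_n v k) theta (theta + psi) (Derive_n v (S k))) as [c0 [Hc0 Heq]].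
  - intros x _. apply analytic_deriv; exact Hv.
  - intros x _. apply (proj2 (continuity_pt_filterlim _ _)). apply analytic_cont; exact Hv.
  - assert (Hc0u : Rabs (c0 - u) < d).
    { apply Rabs_def2 in Ht. apply Rabs_def2 in Hpsi. apply Rabs_def1.
      - destruct (Rle_dec theta (theta + psi)).
        + rewrite Rmax_right in Hc0 by lra. lra.
        + rewrite Rmax_left in Hc0 by lra. lra.
      - destruct (Rle_dec theta (theta + psi)).
        + rewrite Rmin_left in Hc0 by lra. lra.
        + rewrite Rmin_right in Hc0 by lra. lra. }
    specialize (C c0 Hc0u).
    pose proof (Rabs_triang_inv (Derive_n v (S k) u) (Derive_n v (S k) c0)) as T.
    rewrite Rabs_minus_sym in T.
    rewrite Heq. replace (theta + psi - theta) with psi by ring. rewrite Rabs_mult.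
    apply Rmult_le_compat_r; [apply Rabs_pos|]. unfold m in *. lra.
Qed.

Lemma mid (v : R -> R) : real_analytic v -> minimal_period_one v ->
  forall u w, 0 < w < 1 -> exists k c r, 0 < c /\ 0 < r /\ forall theta phi,
    Rabs (theta - u) < r -> Rabs (phi - w) < r ->
    c <= Rabs (Derive_n v k (theta + phi) - Derive_n v k theta).
Proof.
  intros Hv [Hp Hmin] u w Hw.
  assert (Hk : exists k, Derive_n v k (u + w) <> Derive_n v k u).
  { destruct (classic (exists k, Derive_n v k (u + w) <> Derive_n v k u)) as [H|H]; [exact H|exfalso].
    apply (Hmin w Hw). intro x.
    apply (identity_thm (fun t => v (t + w)) v (analytic_shift v w Hv) Hv u).
    intro k. rewrite Derive_n_comp_trans. apply NNPP. intro H'. apply H. exists k. exact H'. }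
  destruct Hk as [k Hk].
  set (A := Derive_n v k (u + w)). set (B := Derive_n v k u).
  set (m := Rabs (A - B)).
  assert (Hm : 0 < m) by (apply Rabs_pos_lt; intro; apply Hk; unfold A, B in *; lra).
  destruct (cont_eps _ (u + w) (analytic_cont v Hv k (u + w)) (m/4)) as [d1 [Hd1 C1]]; [lra|].
  destruct (cont_eps _ u (analytic_cont v Hv k u) (m/4)) as [d2 [Hd2 C2]]; [lra|].
  exists k, (m/2), (Rmin d1 d2 / 2). split; [lra|]. split; [pose proof (Rmin_pos d1 d2 Hd1 Hd2); lra|].
  intros theta phi Ht Hph.
  pose proof (Rmin_l d1 d2). pose proof (Rmin_r d1 d2).
  assert (E1 : Rabs (theta + phi - (u + w)) < d1).
  { replace (theta + phi - (u + w)) with ((theta - u) + (phi - w)) by ring.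
    pose proof (Rabs_triang (theta - u) (phi - w)). lra. }
  specialize (C1 _ E1). specialize (C2 theta ltac:(lra)).
  fold A in C1. fold B in C2.
  assert (m <= Rabs (Derive_n v k (theta + phi) - A) + Rabs (Derive_n v k (theta + phi) - Derive_n v k theta)
              + Rabs (Derive_n v k theta - B)).
  { unfold m. rewrite <- (Rabs_Ropp (Derive_n v k (theta + phi) - A)).
    replace (A - B) with (- (Derive_n v k (theta + phi) - A) +
       (Derive_n v k (theta + phi) - Derive_n v k theta) + (Derive_n v k theta - B)) by ring.
    eapply Rle_trans; [apply Rabs_triang|]. apply Rplus_le_compat_r. apply Rabs_triang. }
  lra.
Qed.

Definition Gfun (v : R -> R) (theta phi : R) : nat -> R :=
  fun l => Rabs (Derive_n (fun t => v (t + phi) - v t) l theta).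

Lemma max_upto_ext (f g : nat -> R) (s : nat) : (forall l, f l = g l) -> max_upto f s = max_upto g s.
Proof. intro H. induction s as [|s IH]; simpl; rewrite ?IH; rewrite ?H; reflexivity. Qed.

Lemma local_all (v : R -> R) : real_analytic v -> (~ exists k : R, forall x : R, v x = k) ->
  minimal_period_one v -> forall u w,
  exists (s : nat) (c r : R), 0 < c /\ 0 < r /\ (0 <= w <= 1 -> forall theta phi,
    Rabs (theta - u) < r -> Rabs (phi - w) < r ->
    c * torus_norm phi <= max_upto (Gfun v theta phi) s).
Proof.
  intros Hv Hnc Hmp u w. pose proof Hmp as [Hp Hmin].
  destruct (classic (0 <= w <= 1)) as [Hw|Hw].
  2:{ exists O, 1, 1. split; [lra|]. split; [lra|]. intro; contradiction. }
  destruct (Req_dec w 0) as [H0|H0].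
  { subst w. destruct (near0 v Hv Hnc u) as [k [c [r [Hc [Hr H]]]]].
    exists k, c, r. split; [exact Hc|]. split; [exact Hr|]. intros _ theta phi Ht Hph.
    eapply Rle_trans; [|apply (max_upto_ge _ k k (le_n k))]. unfold Gfun. rewrite Dg by exact Hv.
    eapply Rle_trans; [|apply H; [exact Ht| rewrite Rminus_0_r in Hph; exact Hph]].
    apply Rmult_le_compat_l; [lra|]. pose proof (tn_le phi 0) as T.
    change (IZR 0) with 0 in T. rewrite Rabs_minus_sym, Rminus_0_r in T. exact T. }
  destruct (Req_dec w 1) as [H1|H1].
  { subst w. destruct (near0 v Hv Hnc u) as [k [c [r [Hc [Hr H]]]]].
    exists k, c, r. split; [exact Hc|]. split; [exact Hr|]. intros _ theta phi Ht Hph.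
    eapply Rle_trans; [|apply (max_upto_ge _ k k (le_n k))]. unfold Gfun. rewrite Dg by exact Hv.
    replace (theta + phi) with ((theta + (phi - 1)) + 1) by ring. rewrite Vper1 by exact Hp.
    eapply Rle_trans; [|apply H; [exact Ht| exact Hph]].
    apply Rmult_le_compat_l; [lra|]. pose proof (tn_le phi 1) as T.
    rewrite Rabs_minus_sym in T. exact T. }
  destruct (mid v Hv Hmp u w ltac:(lra)) as [k [c [r [Hc [Hr H]]]]].
  exists k, c, r. split; [exact Hc|]. split; [exact Hr|]. intros _ theta phi Ht Hph.
  eapply Rle_trans; [|apply (max_upto_ge _ k k (le_n k))]. unfold Gfun. rewrite Dg by exact Hv.
  eapply Rle_trans; [|apply H; [exact Ht| exact Hph]].
  pose proof (tn_le1 phi). pose proof (tn_nonneg phi).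
  rewrite <- (Rmult_1_r c) at 2. apply Rmult_le_compat_l; lra.
Qed.

Theorem lemmaB1 (v : R -> R) :
  real_analytic v ->
  (~ exists k : R, forall x : R, v x = k) ->
  minimal_period_one v ->
  exists (s : nat) (c : R), 0 < c /\
    forall theta phi : R,
      max_upto (fun l => Rabs (Derive_n (fun t => v (t + phi) - v t) l theta)) s
        >= c * torus_norm phi.
Proof.
  intros Hv Hnc Hmp. pose proof Hmp as [Hp Hmin].
  assert (Hloc : forall u w, {p : nat * R * R | 0 < snd (fst p) /\ 0 < snd p /\
    (0 <= w <= 1 -> forall theta phi, Rabs (theta - u) < snd p -> Rabs (phi - w) < snd p ->
       snd (fst p) * torus_norm phi <= max_upto (Gfun v theta phi) (fst (fst p)))}).
  { intros u w. apply constructive_indefinite_description.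
    destruct (local_all v Hv Hnc Hmp u w) as [s [c [r H]]]. exists (s, c, r). exact H. }
  set (ss := fun u w => fst (fst (proj1_sig (Hloc u w)))).
  set (cc := fun u w => snd (fst (proj1_sig (Hloc u w)))).
  set (rr := fun u w => snd (proj1_sig (Hloc u w))).
  assert (dpos : forall u w, 0 < Rmin (Rmin (rr u w) (cc u w)) (/ (INR (ss u w) + 1))).
  { intros u w. destruct (proj2_sig (Hloc u w)) as [Hc [Hr _]].
    apply Rmin_pos; [apply Rmin_pos; assumption|]. apply Rinv_0_lt_compat.
    pose proof (pos_INR (ss u w)). lra. }
  set (delta := fun u w => mkposreal _ (dpos u w)).
  destruct (compactness_value_2d 0 1 0 1 delta) as [d Hd].
  destruct (INR_unbounded (/ d)) as [N HN].
  exists N, d. split; [apply cond_pos|]. intros theta phi.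
  set (theta' := theta + IZR (1 - up theta)). set (phi' := phi + IZR (1 - up phi)).
  assert (Rt : 0 <= theta' <= 1).
  { unfold theta'. rewrite minus_IZR. destruct (archimed theta). simpl. lra. }
  assert (Rp : 0 <= phi' <= 1).
  { unfold phi'. rewrite minus_IZR. destruct (archimed phi). simpl. lra. }
  apply Rle_ge. apply NNPP. intro Hn. apply (Hd theta' phi' Rt Rp).
  intros [u [w [Hu [Hw [H1 [H2 H3]]]]]]. apply Hn.
  destruct (proj2_sig (Hloc u w)) as [Hc [Hr Hm]].
  simpl in H1, H2, H3.
  pose proof (Rmin_l (Rmin (rr u w) (cc u w)) (/ (INR (ss u w) + 1))).
  pose proof (Rmin_r (Rmin (rr u w) (cc u w)) (/ (INR (ss u w) + 1))).
  pose proof (Rmin_l (rr u w) (cc u w)). pose proof (Rmin_r (rr u w) (cc u w)).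
  specialize (Hm Hw theta' phi').
  fold (rr u w) (cc u w) (ss u w) in Hm.
  specialize (Hm ltac:(lra) ltac:(lra)).
  assert (Hsame : max_upto (Gfun v theta' phi') (ss u w) =
                  max_upto (fun l => Rabs (Derive_n (fun t => v (t + phi) - v t) l theta)) (ss u w)).
  { apply max_upto_ext. intro l. unfold Gfun. rewrite !Dg by exact Hv. f_equal.
    unfold theta', phi'.
    replace (theta + IZR (1 - up theta) + (phi + IZR (1 - up phi))) with
       ((theta + phi) + IZR ((1 - up theta) + (1 - up phi))) by (rewrite plus_IZR; ring).
    rewrite !VperZ by exact Hp. reflexivity. }
  rewrite Hsame in Hm. unfold phi' in Hm. rewrite tn_shift in Hm.
  assert (HsN : (ss u w <= N)%nat).
  { assert (Hd0 : 0 < d) by apply cond_pos.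
    assert (INR (ss u w) + 1 <= / d).
    { assert (d <= / (INR (ss u w) + 1)) by lra.
      pose proof (pos_INR (ss u w)).
      rewrite <- (Rinv_inv (INR (ss u w) + 1)). apply Rinv_le_contravar; assumption. }
    assert (Hlt : INR (ss u w) < INR N) by lra. apply INR_lt in Hlt. lia. }
  pose proof (max_upto_mono (fun l => Rabs (Derive_n (fun t => v (t + phi) - v t) l theta)) _ _ HsN).
  pose proof (tn_nonneg phi).
  assert (d * torus_norm phi <= cc u w * torus_norm phi) by (apply Rmult_le_compat_r; lra).
  lra.
Qed.
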